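(* Let $a\in\mathbb{R}$, $h>0$, $b=a+kh$ with $k\ge2$, $\mathbb{T}=\{a,a+h,\dots,b\}$, and let $L(t,u,v):\mathbb{T}^\kappa\times\mathbb{R}^2\to\mathbb{R}$ have continuous second partial derivatives in $(u,v)$. If $\hat y$ is a local minimizer of $$\mathcal{L}(y)=\int_a^bL(t,y(\sigma(t)),y^\Delta(t))\Delta t\to\min,\qquad y(a)=A,\ y(b)=B,$$ (local with respect to the norm $\|y\|=\max_{\mathbb{T}^\kappa}|y(\sigma(t))|+\max_{\mathbb{T}^\kappa}|y^\Delta(t)|$), then for all $t\in\mathbb{T}^{\kappa^2}$, $$h^2L_{uu}[\hat y](t)+2hL_{uv}[\hat y](t)+L_{vv}[\hat y](t)+L_{vv}[\hat y](\sigma(t))\ge0,$$ where $[\hat y](t)=(t,\hat y(\sigma(t)),\hat y^\Delta(t))$.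
   Context: $\mathbb{T}^\kappa=\mathbb{T}\setminus\{b\}$, $\mathbb{T}^{\kappa^2}=\mathbb{T}\setminus\{b-h,b\}$, $\sigma(t)=t+h$, $y^\Delta(t)=(y(t+h)-y(t))/h$, and $\int_a^bG(t)\Delta t:=h\sum_{j=0}^{k-1}G(a+jh)$. A function $\hat y$ with $\hat y(a)=A$, $\hat y(b)=B$ is a local minimizer if there is $\delta>0$ such that $\mathcal{L}(\hat y)\le\mathcal{L}(y)$ for all $y:\mathbb{T}\to\mathbb{R}$ with $y(a)=A$, $y(b)=B$ and $\|y-\hat y\|<\delta$. *)

(* Defs.v *)
From Stdlib Require Import Reals Lra.
Open Scope R_scope.

Definition tpt (a h : R) (j : nat) : R := a + INR j * h.

Definition sgm (h t : R) : R := t + h.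
Definition delta_deriv (h : R) (y : R -> R) (t : R) : R := (y (sgm h t) - y t) / h.

Fixpoint rsum (f : nat -> R) (n : nat) : R :=
  match n with O => 0 | S m => rsum f m + f m end.

(* max_{j=0}^{n-1} f j  (0 for n = 0; used only with nonnegative f and n >= 2) *)
Fixpoint rmaxn (f : nat -> R) (n : nat) : R :=
  match n with O => 0 | S m => Rmax (rmaxn f m) (f m) end.

(* delta integral over [a,b) with b = a + k h:  h * sum_{j<k} G(a+jh) *)
Definition delta_int (a h : R) (k : nat) (G : R -> R) : R :=
  h * rsum (fun j => G (tpt a h j)) k.

Definition functional (a h : R) (k : nat) (L : R -> R -> R -> R) (y : R -> R) : R :=
  delta_int a h k (fun t => L t (y (sgm h t)) (delta_deriv h y t)).

Definition ynorm (a h : R) (k : nat) (y : R -> R) : R :=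
  rmaxn (fun j => Rabs (y (sgm h (tpt a h j)))) k
  + rmaxn (fun j => Rabs (delta_deriv h y (tpt a h j))) k.

Definition local_minimizer (a h : R) (k : nat) (L : R -> R -> R -> R)
  (A B : R) (yh : R -> R) : Prop :=
  yh a = A /\ yh (tpt a h k) = B /\
  exists delta, 0 < delta /\
    forall y : R -> R, y a = A -> y (tpt a h k) = B ->
      ynorm a h k (fun t => y t - yh t) < delta ->
      functional a h k L yh <= functional a h k L y.

Definition continuous2 (f : R -> R -> R) : Prop :=
  forall u v eps, 0 < eps -> exists d, 0 < d /\
    forall u' v', Rabs (u' - u) < d -> Rabs (v' - v) < d ->
      Rabs (f u' v' - f u v) < eps.

(* Main.v *)
Require Import Defs.
From Stdlib Require Import Reals Lra Lia FunctionalExtensionality.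
From Coquelicot Require Import Coquelicot.
Open Scope R_scope.

Lemma Dext (f : R -> R) x l l' : derivable_pt_lim f x l -> l = l' -> derivable_pt_lim f x l'.
Proof. intros H ->; exact H. Qed.

Lemma Dlin p q x : derivable_pt_lim (fun e => p + e * q) x q.
Proof.
  intros eps He. exists (mkposreal 1 Rlt_0_1). intros h' Hh _.
  replace ((p + (x + h') * q - (p + x * q)) / h' - q) with 0 by (field; auto).
  rewrite Rabs_R0; lra.
Qed.

Lemma Dmulc (f : R -> R) x l c : derivable_pt_lim f x l -> derivable_pt_lim (fun y => f y * c) x (l * c).
Proof.
  intros H. pose proof (derivable_pt_lim_scal f c x l H) as H1.
  unfold mult_real_fct in H1.
  replace (fun y => f y * c) with (fun y => c * f y) by (apply functional_extensionality; intro; ring).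
  replace (l * c) with (c * l) by ring. exact H1.
Qed.

Lemma Dplus (f g : R -> R) x a b : derivable_pt_lim f x a -> derivable_pt_lim g x b ->
  derivable_pt_lim (fun y => f y + g y) x (a + b).
Proof. intros Ha Hb. exact (derivable_pt_lim_plus f g x a b Ha Hb). Qed.

Lemma Dcomp (f1 f2 : R -> R) x l1 l2 : derivable_pt_lim f1 x l1 -> derivable_pt_lim f2 (f1 x) l2 ->
  derivable_pt_lim (fun y => f2 (f1 y)) x (l2 * l1).
Proof. intros H1 H2. exact (derivable_pt_lim_comp f1 f2 x l1 l2 H1 H2). Qed.

Lemma MVT_any (f f' : R -> R) a b : (forall c, derivable_pt_lim f c (f' c)) ->
  exists c, f b - f a = f' c * (b - a) /\ Rabs (c - a) <= Rabs (b - a).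
Proof.
  intros H. destruct (Rtotal_order a b) as [Hab|[Hab|Hab]].
  - destruct (MVT_cor2 f f' a b Hab (fun c _ => H c)) as [c [E Hc]].
    exists c; split; auto. rewrite !Rabs_right; lra.
  - subst. exists b. split. ring. right; reflexivity.
  - destruct (MVT_cor2 f f' b a Hab (fun c _ => H c)) as [c [E Hc]].
    exists c; split. lra. rewrite !Rabs_left; lra.
Qed.

Lemma diff_partials (f fx fy : R -> R -> R) :
  (forall u v, derivable_pt_lim (fun u' => f u' v) u (fx u v)) ->
  (forall u v, derivable_pt_lim (fun v' => f u v') v (fy u v)) ->
  continuous2 fx -> continuous2 fy ->
  forall x y, differentiable_pt_lim f x y (fx x y) (fy x y).
Proof.
  intros Hx Hy Cx Cy x y eps.
  assert (He2 : 0 < eps / 2) by (destruct eps; simpl; lra).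
  destruct (Cx x y _ He2) as [d1 [Hd1 P1]].
  destruct (Cy x y _ He2) as [d2 [Hd2 P2]].
  assert (Hd : 0 < Rmin d1 d2) by (apply Rmin_glb_lt; auto).
  exists (mkposreal _ Hd). simpl. intros u v Hu Hv.
  pose proof (Rmin_l d1 d2); pose proof (Rmin_r d1 d2).
  destruct (MVT_any (fun u' => f u' v) (fun u' => fx u' v) x u (fun c => Hx c v)) as [c [E1 B1]].
  destruct (MVT_any (fun v' => f x v') (fun v' => fy x v') y v (fun c => Hy x c)) as [c' [E2 B2]].
  simpl in E1, E2.
  replace (f u v - f x y - (fx x y * (u - x) + fy x y * (v - y)))
    with ((fx c v - fx x y) * (u - x) + (fy x c' - fy x y) * (v - y)) by lra.
  assert (A1 : Rabs (fx c v - fx x y) < eps / 2) by (apply P1; lra).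
  assert (A2 : Rabs (fy x c' - fy x y) < eps / 2) by (apply P2; [rewrite Rminus_diag, Rabs_R0|]; lra).
  eapply Rle_trans. apply Rabs_triang. rewrite !Rabs_mult.
  pose proof (Rmax_l (Rabs (u - x)) (Rabs (v - y))).
  pose proof (Rmax_r (Rabs (u - x)) (Rabs (v - y))).
  pose proof (Rabs_pos (u - x)); pose proof (Rabs_pos (v - y)).
  pose proof (Rabs_pos (fx c v - fx x y)); pose proof (Rabs_pos (fy x c' - fy x y)).
  destruct eps as [e Hepos]; simpl in *.
  apply Rle_trans with (e / 2 * Rabs (u - x) + e / 2 * Rabs (v - y)).
  - apply Rplus_le_compat; apply Rmult_le_compat_r; lra.
  - nra.
Qed.

Lemma cont_of_diff (f fx fy : R -> R -> R) :
  (forall x y, differentiable_pt_lim f x y (fx x y) (fy x y)) -> continuous2 f.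
Proof.
  intros H u v eps He.
  assert (C : continuity_2d_pt f u v).
  { apply differentiable_continuity_pt. exists (fx u v), (fy u v). apply H. }
  destruct (C (mkposreal eps He)) as [d Hd].
  exists d. split. apply cond_pos. intros; apply Hd; auto.
Qed.

Lemma c2_to_2d (f : R -> R -> R) x y : continuous2 f -> continuity_2d_pt f x y.
Proof.
  intros C eps. destruct (C x y eps (cond_pos eps)) as [d [Hd P]].
  exists (mkposreal d Hd). intros; apply P; auto.
Qed.

Lemma schwarz_eq (f fx fy fxy fyx : R -> R -> R) :
  (forall u v, derivable_pt_lim (fun u' => f u' v) u (fx u v)) ->
  (forall u v, derivable_pt_lim (fun v' => f u v') v (fy u v)) ->
  (forall u v, derivable_pt_lim (fun v' => fx u v') v (fxy u v)) ->
  (forall u v, derivable_pt_lim (fun u' => fy u' v) u (fyx u v)) ->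
  continuous2 fxy -> continuous2 fyx ->
  forall x y, fxy x y = fyx x y.
Proof.
  intros Hx Hy Hxy Hyx Cxy Cyx x y.
  assert (Ey : forall v, (fun z => Derive (fun t => f z t) v) = (fun z => fy z v)).
  { intro v; apply functional_extensionality; intro z. apply is_derive_unique, is_derive_Reals, Hy. }
  assert (Ex : forall u, (fun z => Derive (fun t => f t z) u) = (fun z => fx u z)).
  { intro u; apply functional_extensionality; intro z. apply is_derive_unique, is_derive_Reals, Hx. }
  pose proof (Schwarz f x y) as S.
  rewrite Ey, Ex in S.
  rewrite (is_derive_unique _ _ _ (proj2 (is_derive_Reals _ _ _) (Hyx x y))) in S.
  rewrite (is_derive_unique _ _ _ (proj2 (is_derive_Reals _ _ _) (Hxy x y))) in S.
  symmetry; apply S.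
  - exists (mkposreal 1 Rlt_0_1). intros u v _ _.
    rewrite Ey, Ex. repeat split.
    + exists (fx u v); apply is_derive_Reals, Hx.
    + exists (fy u v); apply is_derive_Reals, Hy.
    + exists (fyx u v); apply is_derive_Reals, Hyx.
    + exists (fxy u v); apply is_derive_Reals, Hxy.
  - apply continuity_2d_pt_ext with (f := fyx).
    + intros u v. rewrite Ey. symmetry. apply is_derive_unique, is_derive_Reals, Hyx.
    + apply c2_to_2d; auto.
  - apply continuity_2d_pt_ext with (f := fxy).
    + intros u v. rewrite Ex. symmetry. apply is_derive_unique, is_derive_Reals, Hxy.
    + apply c2_to_2d; auto.
Qed.

Lemma min_second (psi d1 : R -> R) c r : 0 < r ->
  (forall s, Rabs s < r -> psi 0 <= psi s) ->
  (forall s, derivable_pt_lim psi s (d1 s)) ->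
  derivable_pt_lim d1 0 c -> 0 <= c.
Proof.
  intros Hr Hmin Hd Hc.
  assert (D0 : d1 0 = 0).
  { pose (pr := exist (fun l => derivable_pt_abs psi 0 l) (d1 0) (Hd 0) : derivable_pt psi 0).
    pose proof (deriv_minimum psi (-r) r 0 pr) as M. simpl in M. apply M; try lra.
    intros x H1 H2. apply Hmin. apply Rabs_def1; lra. }
  destruct (Rle_or_lt 0 c) as [|Hneg]; auto. exfalso.
  destruct (Hc (- c / 2) ltac:(lra)) as [d Hdd].
  assert (Hdpos := cond_pos d).
  set (s := Rmin r d / 2).
  assert (Hs : 0 < s) by (unfold s; pose proof (Rmin_glb_lt r d 0 Hr Hdpos); lra).
  assert (Hs1 : s < r) by (unfold s; pose proof (Rmin_l r d); lra).
  assert (Hs2 : s < d) by (unfold s; pose proof (Rmin_r r d); lra).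
  destruct (MVT_cor2 psi d1 0 s Hs (fun c _ => Hd c)) as [th [E [T1 T2]]].
  assert (Hneg2 : d1 th < 0).
  { specialize (Hdd th ltac:(lra) ltac:(rewrite Rabs_right; lra)).
    rewrite Rplus_0_l, D0, Rminus_0_r in Hdd.
    apply Rabs_def2 in Hdd. destruct Hdd as [Q1 Q2].
    assert (d1 th / th < 0) by lra.
    assert (d1 th = (d1 th / th) * th) by (field; lra). nra. }
  assert (psi s < psi 0) by nra.
  specialize (Hmin s ltac:(rewrite Rabs_right; lra)). lra.
Qed.
Lemma rsum_ext f g n : (forall i, f i = g i) -> rsum f n = rsum g n.
Proof. intros H; induction n; simpl; auto. rewrite IHn, H; auto. Qed.

Lemma rsum_minus f g n : rsum f n - rsum g n = rsum (fun i => f i - g i) n.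
Proof. induction n; simpl. ring. rewrite <- IHn; ring. Qed.

Lemma rsum_two d j n : (forall i, i <> j -> i <> S j -> d i = 0) ->
  rsum d n = (if Compare_dec.lt_dec j n then d j else 0) + (if Compare_dec.lt_dec (S j) n then d (S j) else 0).
Proof.
  intros H; induction n; simpl.
  - destruct (Compare_dec.lt_dec j 0); [lia|]. destruct (Compare_dec.lt_dec (S j) 0); [lia|]. ring.
  - rewrite IHn.
    destruct (Nat.eq_dec n j) as [->|Hnj].
    + destruct (Compare_dec.lt_dec j j); [lia|]. destruct (Compare_dec.lt_dec j (S j)); [|lia].
      destruct (Compare_dec.lt_dec (S j) j); [lia|]. destruct (Compare_dec.lt_dec (S j) (S j)); [lia|]. ring.
    + destruct (Nat.eq_dec n (S j)) as [->|Hnsj].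
      * destruct (Compare_dec.lt_dec j (S j)); [|lia]. destruct (Compare_dec.lt_dec j (S (S j))); [|lia].
        destruct (Compare_dec.lt_dec (S j) (S j)); [lia|]. destruct (Compare_dec.lt_dec (S j) (S (S j))); [|lia]. ring.
      * rewrite (H n Hnj Hnsj).
        destruct (Compare_dec.lt_dec j n), (Compare_dec.lt_dec j (S n)), (Compare_dec.lt_dec (S j) n), (Compare_dec.lt_dec (S j) (S n)); try lia; ring.
Qed.

Lemma rmaxn_le f n M : 0 <= M -> (forall i, f i <= M) -> rmaxn f n <= M.
Proof. intros H0 H; induction n; simpl; auto. apply Rmax_lub; auto. Qed.

Lemma functional_eq a h k L y : 0 < h ->
  functional a h k L y = h * rsum (fun i => L (tpt a h i) (y (tpt a h (S i)))
     ((y (tpt a h (S i)) - y (tpt a h i)) / h)) k.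
Proof.
  intros Hh. unfold functional, delta_int, delta_deriv. f_equal. apply rsum_ext. intro i.
  replace (sgm h (tpt a h i)) with (tpt a h (S i)); [reflexivity|].
  unfold sgm, tpt. rewrite S_INR. ring.
Qed.

Theorem mainTheorem13
  (a h : R) (k : nat) (A B : R)
  (L Lu Lv Luu Luv Lvu Lvv : R -> R -> R -> R) (yh : R -> R) :
  0 < h -> (2 <= k)%nat ->
  (* on T^kappa: L(t,.,.) has continuous second partial derivatives in (u,v) *)
  (forall j, (j < k)%nat -> let t := tpt a h j in
     (forall u v, derivable_pt_lim (fun u' => L t u' v) u (Lu t u v)) /\
     (forall u v, derivable_pt_lim (fun v' => L t u v') v (Lv t u v)) /\
     (forall u v, derivable_pt_lim (fun u' => Lu t u' v) u (Luu t u v)) /\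
     (forall u v, derivable_pt_lim (fun v' => Lu t u v') v (Luv t u v)) /\
     (forall u v, derivable_pt_lim (fun u' => Lv t u' v) u (Lvu t u v)) /\
     (forall u v, derivable_pt_lim (fun v' => Lv t u v') v (Lvv t u v)) /\
     continuous2 (Luu t) /\ continuous2 (Luv t) /\
     continuous2 (Lvu t) /\ continuous2 (Lvv t)) ->
  local_minimizer a h k L A B yh ->
  forall j, (j < k - 1)%nat ->
    let t := tpt a h j in
    let ys := fun s => yh (sgm h s) in
    let yd := fun s => delta_deriv h yh s in
    h ^ 2 * Luu t (ys t) (yd t) + 2 * h * Luv t (ys t) (yd t)
    + Lvv t (ys t) (yd t)
    + Lvv (sgm h t) (ys (sgm h t)) (yd (sgm h t)) >= 0.
Proof.
  intros Hh Hk Hyp [HA [HB [delta [Hdel Hmin]]]] j Hj.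
  cbv zeta. unfold delta_deriv.
  assert (Hsig : forall i, sgm h (tpt a h i) = tpt a h (S i))
    by (intro i; unfold sgm, tpt; rewrite S_INR; ring).
  rewrite !Hsig.
  assert (Hinj : forall m n, tpt a h m = tpt a h n -> m = n).
  { intros m n E. unfold tpt in E. apply INR_eq.
    apply Rmult_eq_reg_r with h; lra. }
  destruct (Hyp j ltac:(lia)) as [Lu_d [Lv_d [Luu_d [Luv_d [Lvu_d [Lvv_d [Cuu [Cuv [Cvu Cvv]]]]]]]]].
  destruct (Hyp (S j) ltac:(lia)) as [_ [Lv2_d [_ [_ [_ [Lvv2_d _]]]]]].
  set (t := tpt a h j) in *. set (t2 := tpt a h (S j)) in *.
  pose (dl := fun s => if Req_EM_T s t2 then 1 else 0).
  assert (Hdt : forall m, dl (tpt a h m) = if Nat.eq_dec m (S j) then 1 else 0).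
  { intro m. unfold dl. destruct (Req_EM_T (tpt a h m) t2) as [E|E];
    destruct (Nat.eq_dec m (S j)) as [E'|E']; auto.
    - exfalso; apply E', Hinj, E.
    - exfalso; apply E; subst; reflexivity. }
  pose proof (diff_partials (Lu t) (Luu t) (Luv t) Luu_d Luv_d Cuu Cuv) as DLu.
  pose proof (diff_partials (Lv t) (Lvu t) (Lvv t) Lvu_d Lvv_d Cvu Cvv) as DLv.
  pose proof (cont_of_diff _ _ _ DLu) as CLu.
  pose proof (cont_of_diff _ _ _ DLv) as CLv.
  pose proof (diff_partials (L t) (Lu t) (Lv t) Lu_d Lv_d CLu CLv) as DL.
  pose proof (schwarz_eq (L t) (Lu t) (Lv t) (Luv t) (Lvu t) Lu_d Lv_d Luv_d Lvu_d Cuv Cvu) as Sym.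
  pose (U := yh t2). pose (V := (yh t2 - yh t) / h).
  pose (U2 := yh (tpt a h (S (S j)))). pose (V2 := (U2 - U) / h).
  pose (q := / h).
  pose (psi := fun e => L t (U + e * 1) (V + e * q) + L t2 U2 (V2 + e * (- q))).
  pose (d1 := fun e => (Lu t (U + e * 1) (V + e * q) * 1 + Lv t (U + e * 1) (V + e * q) * q)
                      + Lv t2 U2 (V2 + e * (- q)) * (- q)).
  pose (c := ((Luu t (U + 0 * 1) (V + 0 * q) * 1 + Luv t (U + 0 * 1) (V + 0 * q) * q) * 1
            + (Lvu t (U + 0 * 1) (V + 0 * q) * 1 + Lvv t (U + 0 * 1) (V + 0 * q) * q) * q)
            + Lvv t2 U2 (V2 + 0 * (- q)) * (- q) * (- q)).
  assert (Hfun : forall e, functional a h k L (fun s => yh s + e * dl s)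
                 - functional a h k L yh = h * (psi e - psi 0)).
  { intro e. rewrite !functional_eq by exact Hh.
    rewrite <- Rmult_minus_distr_l. f_equal.
    rewrite rsum_minus. rewrite (rsum_two _ j).
    - destruct (Compare_dec.lt_dec j k); [|lia]. destruct (Compare_dec.lt_dec (S j) k); [|lia].
      cbv beta. change (tpt a h j) with t. change (tpt a h (S j)) with t2.
      rewrite !Hdt.
      destruct (Nat.eq_dec (S j) (S j)); [|congruence].
      destruct (Nat.eq_dec j (S j)); [lia|].
      destruct (Nat.eq_dec (S (S j)) (S j)); [lia|].
      change (tpt a h j) with t. change (tpt a h (S j)) with t2.
      unfold psi, V2, U2, V, U, q.
      assert (D1 : dl t2 = 1) by (unfold t2; rewrite Hdt; destruct Nat.eq_dec; [reflexivity|lia]).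
      assert (D0 : dl t = 0) by (unfold t; rewrite Hdt; destruct Nat.eq_dec; [lia|reflexivity]).
      rewrite D1, D0.
      set (W := yh (tpt a h (S (S j)))).
      replace ((yh t2 + e * 1 - (yh t + e * 0)) / h) with ((yh t2 - yh t) / h + e * / h) by (field; lra).
      replace ((W + e * 0 - (yh t2 + e * 1)) / h) with ((W - yh t2) / h + e * - / h) by (field; lra).
      replace (W + e * 0) with W by ring.
      replace (yh t2 + 0 * 1) with (yh t2) by ring.
      replace ((yh t2 - yh t) / h + 0 * / h) with ((yh t2 - yh t) / h) by ring.
      replace ((W - yh t2) / h + 0 * - / h) with ((W - yh t2) / h) by ring.
      ring.
    - intros i H1 H2. cbv beta. rewrite !Hdt.
      destruct (Nat.eq_dec (S i) (S j)); [lia|]. destruct (Nat.eq_dec i (S j)); [lia|].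
      rewrite !Rmult_0_r, !Rplus_0_r. ring. }
  assert (Hr : 0 < delta * h / (h + 1)) by (apply Rdiv_lt_0_compat; nra).
  assert (Hpsi : forall e, Rabs e < delta * h / (h + 1) -> psi 0 <= psi e).
  { intros e He.
    assert (Hd01 : forall s, dl s = 0 \/ dl s = 1)
      by (intro s; unfold dl; destruct (Req_EM_T s t2); auto).
    assert (M := Hmin (fun s => yh s + e * dl s)).
    pose proof (Hfun e) as HF.
    assert (h * (psi e - psi 0) >= 0).
    { cut (functional a h k L yh <= functional a h k L (fun s => yh s + e * dl s)); [lra|].
      apply M.
      - unfold dl. destruct (Req_EM_T a t2) as [E|E].
        + exfalso. unfold t2, tpt in E. pose proof (pos_INR j). rewrite S_INR in E. nra.
        + lra.
      - rewrite Hdt. destruct (Nat.eq_dec k (S j)); [lia|]. lra.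
      - unfold ynorm.
        apply Rle_lt_trans with (Rabs e + Rabs e / h).
        + pose proof (Rabs_pos e).
          apply Rplus_le_compat; apply rmaxn_le.
          * auto.
          * intro i. replace (yh (sgm h (tpt a h i)) + e * dl (sgm h (tpt a h i)) - yh (sgm h (tpt a h i)))
              with (e * dl (sgm h (tpt a h i))) by ring.
            rewrite Rabs_mult. destruct (Hd01 (sgm h (tpt a h i))) as [-> | ->];
              rewrite ?Rabs_R0, ?Rabs_R1; lra.
          * apply Rdiv_le_0_compat; lra.
          * intro i. unfold delta_deriv.
            set (s := tpt a h i).
            replace ((yh (sgm h s) + e * dl (sgm h s) - yh (sgm h s) - (yh s + e * dl s - yh s)) / h)
              with ((e * dl (sgm h s) - e * dl s) * / h) by (field; lra).
            rewrite Rabs_mult, (Rabs_right (/ h)) by (left; apply Rinv_0_lt_compat; lra).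
            unfold Rdiv.
            apply Rmult_le_compat_r; [left; apply Rinv_0_lt_compat; lra|].
            destruct (Hd01 (sgm h s)) as [-> | ->]; destruct (Hd01 s) as [-> | ->];
              replace (e * 0 - e * 0) with 0 by ring; try replace (e * 1 - e * 0) with e by ring;
              try replace (e * 0 - e * 1) with (- e) by ring;
              try replace (e * 1 - e * 1) with 0 by ring;
              rewrite ?Rabs_R0, ?Rabs_Ropp; lra.
        + replace (Rabs e + Rabs e / h) with (Rabs e * (h + 1) / h) by (field; lra).
          apply Rmult_lt_reg_r with h; [lra|].
          replace (Rabs e * (h + 1) / h * h) with (Rabs e * (h + 1)) by (field; lra).
          apply Rmult_lt_reg_r with (/ (h + 1)); [apply Rinv_0_lt_compat; lra|].
          replace (Rabs e * (h + 1) * / (h + 1)) with (Rabs e) by (field; lra).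
          replace (delta * h * / (h + 1)) with (delta * h / (h + 1)) by reflexivity. lra. }
    nra. }
  assert (Hd1 : forall e, derivable_pt_lim psi e (d1 e)).
  { intro e. unfold psi, d1.
    apply (Dplus (fun e => L t (U + e * 1) (V + e * q)) (fun e => L t2 U2 (V2 + e * - q))).
    - exact (derivable_pt_lim_comp_2d (L t) (fun e => U + e * 1) (fun e => V + e * q) e _ _ 1 q
              (DL _ _) (Dlin U 1 e) (Dlin V q e)).
    - exact (Dcomp (fun e => V2 + e * - q) (fun v => L t2 U2 v) e (- q) _ (Dlin V2 (- q) e) (Lv2_d _ _)). }
  assert (Hc : derivable_pt_lim d1 0 c).
  { unfold d1, c.
    apply (Dplus (fun e => Lu t (U + e * 1) (V + e * q) * 1 + Lv t (U + e * 1) (V + e * q) * q)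
                 (fun e => Lv t2 U2 (V2 + e * - q) * - q)).
    - apply (Dplus (fun e => Lu t (U + e * 1) (V + e * q) * 1) (fun e => Lv t (U + e * 1) (V + e * q) * q)).
      + apply (Dmulc (fun e => Lu t (U + e * 1) (V + e * q))).
        exact (derivable_pt_lim_comp_2d (Lu t) (fun e => U + e * 1) (fun e => V + e * q) 0 _ _ 1 q
              (DLu _ _) (Dlin U 1 0) (Dlin V q 0)).
      + apply (Dmulc (fun e => Lv t (U + e * 1) (V + e * q))).
        exact (derivable_pt_lim_comp_2d (Lv t) (fun e => U + e * 1) (fun e => V + e * q) 0 _ _ 1 q
              (DLv _ _) (Dlin U 1 0) (Dlin V q 0)).
    - apply (Dmulc (fun e => Lv t2 U2 (V2 + e * - q))).
      exact (Dcomp (fun e => V2 + e * - q) (fun v => Lv t2 U2 v) 0 (- q) _ (Dlin V2 (- q) 0) (Lvv2_d _ _)). }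
  pose proof (min_second psi d1 c _ Hr Hpsi Hd1 Hc) as Hc0.
  unfold c in Hc0.
  replace (U + 0 * 1) with U in Hc0 by ring.
  replace (V + 0 * q) with V in Hc0 by ring.
  replace (V2 + 0 * - q) with V2 in Hc0 by ring.
  rewrite <- Sym in Hc0.
  change ((yh t2 - yh t) / h) with V. change (yh (tpt a h (S (S j)))) with U2.
  change (yh t2) with U. change ((U2 - U) / h) with V2.
  set (X := (Luu t U V * 1 + Luv t U V * q) * 1 + (Luv t U V * 1 + Lvv t U V * q) * q
            + Lvv t2 U2 V2 * - q * - q) in Hc0.
  assert (EQ : h ^ 2 * Luu t U V + 2 * h * Luv t U V + Lvv t U V + Lvv t2 U2 V2 = h ^ 2 * X)
    by (unfold X, q; field; lra).
  rewrite EQ. apply Rle_ge. apply Rmult_le_pos; [apply pow_le; lra | exact Hc0].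
Qed.
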